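(* Let $\Bbbk$ be a field, $n\ge2$, $q\in\Bbbk$ a primitive $n$-th root of unity, $T_n(q)$ the Taft algebra and $A$ a unital associative $\Bbbk$-algebra. Let $\cdot:\Bbbk C_n\otimes A\to A$ be a partial action of $\Bbbk C_n$ on $A$ with $g\cdot1_A=0$. Then for each $w\in A$ such that $w^n\in Z(A)$ and $g^i\cdot w=q^{-i}(g^i\cdot1_A)w$ for all $0\le i\le n-1$, the linear map $\cdot:T_n(q)\otimes A\to A$ defined by $$g^ix^j\cdot a=q^{-ij}\sum_{k=0}^{j}(-1)^kq^{-\frac{k(k-1)}{2}}\binom{j}{k}_{q^{-1}}w^{j-k}(g^{i+k}\cdot a)w^k\qquad(0\le i,j\le n-1,\ a\in A)$$ is a partial action of $T_n(q)$ on $A$.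
   Context: The Taft algebra $T_n(q)$ is the Hopf algebra generated by $g,x$ with relations $g^n=1$, $x^n=0$, $xg=qgx$, basis $\{g^ix^j:0\le i,j<n\}$, $g$ group-like, $\Delta(x)=x\otimes1+g\otimes x$, $\varepsilon(x)=0$. $\Bbbk C_n=\mathrm{span}\{1,g,\dots,g^{n-1}\}\subseteq T_n(q)$ is the group algebra of the cyclic group $C_n=\langle g\rangle$; exponents of $g$ are read modulo $n$. $Z(A)$ is the center of $A$. A partial action of a bialgebra $H$ on $A$ is a linear map $\cdot:H\otimes A\to A$ with $1_H\cdot a=a$, $h\cdot(ab)=(h_1\cdot a)(h_2\cdot b)$, $h\cdot(k\cdot a)=(h_1\cdot1_A)(h_2k\cdot a)$. $q$-binomials: $\binom{0}{0}_p=1$, $\binom{N}{m}_p=0$ if $m>N$ or $m<0$, and $\binom{N}{m}_p=\binom{N-1}{m-1}_p+p^m\binom{N-1}{m}_p$ for $N\ge1$, $0\le m\le N$. *)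

(* Defs.v *)
From HB Require Import structures.
From mathcomp Require Import all_boot all_order all_algebra.
Set Implicit Arguments. Unset Strict Implicit. Unset Printing Implicit Defensive.
Import Order.TTheory GRing.Theory Num.Theory.
Local Open Scope ring_scope.

Lemma ord_pos_n (n : nat) (i : 'I_n) : (0 < n)%N.
Proof. exact: leq_ltn_trans (leq0n i) (ltn_ord i). Qed.

Definition oadd (n : nat) (i : 'I_n) (k : nat) : 'I_n :=
  Ordinal (ltn_pmod (i + k) (ord_pos_n i)).

Fixpoint qbinom (K : fieldType) (p : K) (N m : nat) : K :=
  match N with
  | 0 => if m == 0%N then 1 else 0
  | N'.+1 =>
      if (N < m)%N then 0 else
      match m with
      | 0 => qbinom p N' 0
      | m'.+1 => qbinom p N' m' + p ^+ m * qbinom p N' m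
      end
  end.

(* Finite-dimensional algebras/coalgebras given on a basis indexed by *)
(* a finType I.  Elements of H are coefficient vectors {ffun I -> K}, *)
(* elements of H (x) H are {ffun I * I -> K}.                         *)
Section BasisAlg.
Variables (K : fieldType) (I : finType).

Definition scv (J : finType) (c : K) (f : {ffun J -> K}) : {ffun J -> K} :=
  [ffun d => c * f d].

Definition bvec (i : I) : {ffun I -> K} := [ffun j => (i == j)%:R].

Definition tens (u v : {ffun I -> K}) : {ffun (I * I) -> K} :=
  [ffun s => u s.1 * v s.2].

Definition mulH (mulb : I -> I -> {ffun I -> K}) (u v : {ffun I -> K})
  : {ffun I -> K} :=
  \sum_(i : I) \sum_(j : I) scv (u i * v j) (mulb i j).

Definition mulHH (mulb : I -> I -> {ffun I -> K})
  (U V : {ffun (I * I) -> K}) : {ffun (I * I) -> K} :=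
  \sum_(p : I * I) \sum_(r : I * I)
     scv (U p * V r) (tens (mulb p.1 r.1) (mulb p.2 r.2)).

Definition comulH (comulb : I -> {ffun (I * I) -> K}) (u : {ffun I -> K})
  : {ffun (I * I) -> K} :=
  \sum_(i : I) scv (u i) (comulb i).

Variable A : algType K.

Definition actH (act : I -> A -> A) (h : {ffun I -> K}) (a : A) : A :=
  \sum_(i : I) h i *: act i a.

Definition is_partial_action (oneH : {ffun I -> K})
  (mulb : I -> I -> {ffun I -> K}) (comulb : I -> {ffun (I * I) -> K})
  (act : I -> A -> A) : Prop :=
  [/\ (forall (i : I) (c : K) (a b : A), act i (c *: a + b) = c *: act i a + act i b),
      (forall a : A, actH act oneH a = a),
      (forall (h : {ffun I -> K}) (a b : A),
          actH act h (a * b) =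
          \sum_(p : I * I) comulH comulb h p *: (act p.1 a * act p.2 b)) &
      (forall (h k : {ffun I -> K}) (a : A),
          actH act h (actH act k a) =
          \sum_(p : I * I) comulH comulb h p *:
             (act p.1 1 * actH act (mulH mulb (bvec p.2) k) a))].

End BasisAlg.

(* The group algebra k C_n, basis g^i, i : 'I_n.                      *)
Section GroupAlg.
Variables (K : fieldType) (n : nat).

Definition oneCn : {ffun 'I_n -> K} := [ffun j => (val j == 0%N)%:R].
Definition mulCn (i k : 'I_n) : {ffun 'I_n -> K} := bvec K (oadd i k).
Definition comulCn (i : 'I_n) : {ffun ('I_n * 'I_n) -> K} :=
  [ffun p => ((p.1 == i) && (p.2 == i))%:R].
End GroupAlg.

(* The Taft algebra T_n(q): basis g^i x^j indexed by (i, j).          *)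
(* Product from the relations g^n = 1, x^n = 0, xg = q gx:            *)
(*   g^i x^j * g^k x^l = q^(jk) g^(i+k) x^(j+l)   (0 if j + l >= n).  *)
(* Comultiplication: Delta is the algebra map with Delta g = g(x)g,   *)
(* Delta x = x(x)1 + g(x)x, so Delta(g^i x^j) = (Delta g)^i (Delta x)^j*)
(* computed in the algebra T_n(q) (x) T_n(q).                         *)
Section Taft.
Variables (K : fieldType) (n : nat) (q : K).

Notation TI := ('I_n * 'I_n)%type.

Definition oneTaft : {ffun TI -> K} :=
  [ffun b => ((val b.1 == 0%N) && (val b.2 == 0%N))%:R].
Definition gTaft : {ffun TI -> K} :=
  [ffun b => ((val b.1 == 1 %% n)%N && (val b.2 == 0%N))%:R].
Definition xTaft : {ffun TI -> K} :=
  [ffun b => ((val b.1 == 0%N) && (val b.2 == 1%N))%:R].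

Definition mulTaft (b c : TI) : {ffun TI -> K} :=
  [ffun d => if (val d.1 == (b.1 + c.1) %% n)%N && (val d.2 == b.2 + c.2)%N
             then q ^+ (b.2 * c.1) else 0].

Definition powTaft2 (U : {ffun (TI * TI) -> K}) (m : nat) : {ffun (TI * TI) -> K} :=
  iter m (mulHH mulTaft U) (tens oneTaft oneTaft).

Definition comulTaft (b : TI) : {ffun (TI * TI) -> K} :=
  mulHH mulTaft (powTaft2 (tens gTaft gTaft) b.1)
             (powTaft2 (tens xTaft oneTaft + tens gTaft xTaft) b.2).

Variable A : algType K.

Definition taft_act (actC : 'I_n -> A -> A) (w : A) (b : TI) (a : A) : A :=
  q ^- (b.1 * b.2) *:
   \sum_(k < b.2.+1)
     (((-1) ^+ k * q ^- ((k * (k - 1)) %/ 2) * qbinom q^-1 b.2 k) *: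
        (w ^+ (b.2 - k) * actC (oadd b.1 k) a * w ^+ k)).

End Taft.

(* Main.v *)
Require Import Defs.
From HB Require Import structures.
From mathcomp Require Import all_boot all_order all_algebra.
From mathcomp Require Import ring lra zify.
Import GRing.Theory.
Local Open Scope ring_scope.

Section QB.
Variables (K : fieldType) (p : K).

Lemma qb_gt N m : (N < m)%N -> qbinom p N m = 0.
Proof. by case: N => [|N] /=; [case: m | move=> ->]. Qed.

Lemma qb_N0 N : qbinom p N 0 = 1.
Proof. by elim: N => //= N ->. Qed.

Lemma qb_S N m : qbinom p N.+1 m.+1 = qbinom p N m + p ^+ m.+1 * qbinom p N m.+1.
Proof.
rewrite /=; case: (ltnP N.+1 m.+1) => // H.
rewrite ltnS in H.
by rewrite !qb_gt ?mulr0 ?addr0 // ltnW.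
Qed.

Lemma qb_NN N : qbinom p N N = 1.
Proof. by elim: N => [|N IH] //; rewrite qb_S IH (@qb_gt N N.+1 (ltnSn N)) mulr0 addr0. Qed.

Lemma qb_S2 N k : qbinom p N.+1 k.+1 = qbinom p N k.+1 + p ^+ (N - k) * qbinom p N k.
Proof.
elim: N k => [|N IH] k.
  case: k => [|k]; first by rewrite qb_NN (@qb_gt 0 1) // qb_N0 expr0 mulr1 add0r.
  by rewrite !qb_gt // mulr0 addr0.
case: k => [|k].
  have E1 : qbinom p N.+2 1 = 1 + p * qbinom p N.+1 1.
    by rewrite qb_S qb_N0 expr1.
  have E2 : qbinom p N.+1 1 = 1 + p * qbinom p N 1.
    by rewrite qb_S qb_N0 expr1.
  have E3 := IH 0%N.
  rewrite qb_N0 subn0 mulr1 in E3 *.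
  rewrite E1 {1}E3 E2 exprS qb_N0; ring.
have E1 : qbinom p N.+2 k.+2 = qbinom p N.+1 k.+1 + p ^+ k.+2 * qbinom p N.+1 k.+2 by rewrite qb_S.
have E2 := IH k.
have E3 := IH k.+1.
have E4 : qbinom p N.+1 k.+2 = qbinom p N k.+1 + p ^+ k.+2 * qbinom p N k.+2 by rewrite qb_S.
have E5 : qbinom p N.+1 k.+1 = qbinom p N k + p ^+ k.+1 * qbinom p N k.+1 by rewrite qb_S.
rewrite subSS [in RHS]E4 [in RHS]E5 E1 E2 E3.
case: (ltnP k N) => Hk.
  have -> : (N - k = (N - k.+1).+1)%N by lia.
  have e : (p ^+ k.+2 * p ^+ (N - k.+1) = p ^+ (N - k.+1).+1 * p ^+ k.+1).
    by rewrite -!exprD; congr (_ ^+ _); lia.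
  rewrite !mulrDr !mulrA e; ring.
rewrite (@qb_gt N k.+1) ?ltnS // (@qb_gt N k.+2) ?ltnS ?(leqW Hk) //.
ring.
Qed.

Lemma qb_ratio N k :
  (1 - p ^+ (N - k)) * qbinom p N k = (1 - p ^+ k.+1) * qbinom p N k.+1.
Proof.
have := qb_S2 N k; rewrite qb_S => E.
apply/eqP; rewrite -subr_eq0; apply/eqP.
transitivity ((qbinom p N k + p ^+ k.+1 * qbinom p N k.+1) -
   (qbinom p N k.+1 + p ^+ (N - k) * qbinom p N k)); first ring.
by rewrite E subrr.
Qed.

Lemma sum_pascal (V : lmodType K) j (F : nat -> V) :
  \sum_(0 <= m < j.+2) qbinom p j.+1 m *: F m =
  \sum_(0 <= m < j.+1) ((p ^+ m * qbinom p j m) *: F m + qbinom p j m *: F m.+1).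
Proof.
rewrite big_split [LHS]big_nat_recl // qb_N0.
under eq_big_nat => m _ do rewrite qb_S scalerDl.
rewrite big_split addrCA [RHS]addrC; congr (_ + _).
rewrite [RHS]big_nat_recl // [in LHS]big_nat_recr //= (@qb_gt j j.+1) // mulr0 scale0r addr0.
by rewrite qb_N0 expr0 mulr1.
Qed.

End QB.


Lemma top_sign (K : fieldType) (q : K) n : (0 < n)%N -> q ^+ n = 1 ->
  (forall m, (0 < m < n)%N -> q ^+ m != 1) ->
  (-1) ^+ n * q ^- ((n * (n - 1)) %/ 2) = -1.
Proof.
move=> n0 qn qp.
have := odd_double_half n; move: (n./2) => m E.
rewrite -muln2 in E.
case Ho: (odd n) in E.
  have h1 : (n - 1 = m * 2)%N by lia.
  rewrite h1 mulnA mulnK // exprM qn expr1n invr1 mulr1 -signr_odd Ho expr1.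
  by [].
have h1 : ((n * (n - 1)) %/ 2 = m * (n - 1))%N.
  by rewrite -{1}E /= add0n mulnAC mulnK.
have hm : q ^+ m = -1.
  have E' : (m * 2 = n)%N by rewrite -E.
  have : (q ^+ m) ^+ 2 == 1 by rewrite -exprM E' qn.
  rewrite sqrf_eq1 => /orP[h|/eqP //].
  by move: (qp m); rewrite h; move/(_ _)/negP; case; lia.
have Ho1 : odd (n - 1).
  have -> : (n - 1 = ((m - 1) * 2).+1)%N by lia.
  by rewrite /= oddM andbF.
rewrite h1 exprM hm -signr_odd Ho -(signr_odd _ (n - 1)) Ho1 expr0 expr1 invrN1 mul1r.
by [].
Qed.

Lemma qb_vanish (K : fieldType) (p : K) n : p ^+ n = 1 ->
  (forall m, (0 < m < n)%N -> p ^+ m != 1) ->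
  forall k, (0 < k < n)%N -> qbinom p n k = 0.
Proof.
move=> pn pp k /andP[]; case: k => // k _.
elim: k => [|k IH] hk.
  have := @qb_ratio K p n 0; rewrite subn0 pn subrr mul0r expr1 => /esym/eqP.
  have h1 : (0 < 1 < n)%N by rewrite hk.
  by rewrite mulf_eq0 subr_eq0 eq_sym (negPf (pp 1%N h1)) /= => /eqP.
have h1 : (0 < k.+2 < n)%N by rewrite hk.
have := @qb_ratio K p n k.+1; rewrite IH ?(ltn_trans _ hk) // mulr0 => /esym/eqP.
by rewrite mulf_eq0 subr_eq0 eq_sym (negPf (pp k.+2 h1)) /= => /eqP.
Qed.


Lemma tri_S k : ((k.+1 * (k.+1 - 1)) %/ 2 = (k * (k - 1)) %/ 2 + k)%N.
Proof.
have -> : (k.+1 * (k.+1 - 1) = k * 2 + k * (k - 1))%N by case: k => [|k]; nia.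
by rewrite divnMDl // addnC.
Qed.

Lemma combo (K : fieldType) (A : algType K) (u v b e f : K) (w X Y X' Y' : A) :
  u * v = f -> b * e = f ->
  u *: ((v *: (w * X - X' * w)) * Y) + b *: (X' * (e *: (w * Y - Y' * w)))
  = f *: (w * (X * Y) - X' * Y' * w).
Proof.
move=> h1 h2.
rewrite -scalerAl scalerA h1 -scalerAr scalerA h2 -scalerDr; congr (_ *: _).
by rewrite mulrBl mulrBr !mulrA addrA subrK.
Qed.

Lemma combo2 (K : fieldType) (A : algType K) (u v b e c B : K) (w X Y X' Y' : A) :
  u * v = c * B -> b * e = c * B ->
  u *: ((v *: (w * X - X' * w)) * Y) + b *: (X' * (e *: (w * Y - Y' * w)))
  = c *: (w * (B *: (X * Y)) - (B *: (X' * Y')) * w).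
Proof.
move=> h1 h2; rewrite (@combo K A u v b e (c * B) w X Y X' Y' h1 h2).
by rewrite -scalerAr -scalerAl -scalerBr scalerA.
Qed.

Section Core.
Variables (K : fieldType) (n : nat) (q : K) (A : algType K) (al : nat -> A -> A) (w : A).
Hypothesis n_gt0 : (0 < n)%N.
Hypothesis qn : q ^+ n = 1.

Lemma q_neq0 : q != 0.
Proof. by apply/eqP => q0; move: qn; rewrite q0 expr0n (negPf (lt0n_neq0 n_gt0)) => /eqP; rewrite eq_sym oner_eq0. Qed.

Definition dc j k : K := (-1) ^+ k * q ^- ((k * (k - 1)) %/ 2) * qbinom q^-1 j k.

Definition T_def i j a : A := q ^- (i * j) *:
   \sum_(k < j.+1) (dc j k *: (w ^+ (j - k) * al (i + k) a * w ^+ k)).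
Fact T_key : unit. Proof. by []. Qed.
Definition T := locked_with T_key T_def.
Lemma T_unlock : T = T_def. Proof. exact: unlock. Qed.

Lemma TE i j a : T i j a = (q^-1) ^+ (i * j) *:
   \sum_(0 <= k < j.+1) (dc j k *: (w ^+ (j - k) * al (i + k) a * w ^+ k)).
Proof. by rewrite T_unlock /T_def big_mkord exprVn. Qed.

Lemma dc0 j : dc j 0 = 1.
Proof. by rewrite /dc qb_N0 expr0 mul0n div0n expr0 invr1 !mul1r. Qed.

Lemma dc_gt j k : (j < k)%N -> dc j k = 0.
Proof. by move=> h; rewrite /dc qb_gt // mulr0. Qed.

Lemma dc_rec j k : dc j.+1 k.+1 = dc j k.+1 - q ^- j * dc j k.
Proof.
rewrite /dc qb_S2 tri_S -!exprVn mulrDr.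
case: (ltnP j k) => h.
  by rewrite (@qb_gt _ q^-1 _ _ h) !mulr0 subr0 addr0.
have -> : (j = (j - k) + k)%N by lia.
rewrite addnK !exprD exprS; ring.
Qed.

Lemma T_rec i j a : T i j.+1 a = q ^- i *: (w * T i j a - T i.+1 j a * w).
Proof.
rewrite !TE.
set X := fun k => w ^+ (j.+1 - k) * al (i + k) a * w ^+ k.
have S1 : w * (\sum_(0 <= k < j.+1) dc j k *: (w ^+ (j - k) * al (i + k) a * w ^+ k))
     = \sum_(0 <= k < j.+1) dc j k *: X k.
  rewrite mulr_sumr; apply: eq_big_nat => k /andP[_ hk].
  by rewrite -scalerAr /X !mulrA -exprS subSn.
have S2 : (\sum_(0 <= k < j.+1) dc j k *: (w ^+ (j - k) * al (i.+1 + k) a * w ^+ k)) * w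
     = \sum_(0 <= k < j.+1) dc j k *: X k.+1.
  rewrite mulr_suml; apply: eq_big_nat => k /andP[_ hk].
  by rewrite -scalerAl /X subSS addSnnS exprSr !mulrA.
rewrite -!scalerAl -!scalerAr S1 S2.
rewrite big_nat_recl // dc0 scale1r.
under eq_big_nat => k _ do rewrite dc_rec scalerBl.
rewrite sumrB addrA.
have -> : X 0%N + \sum_(0 <= k < j.+1) dc j k.+1 *: X k.+1 = \sum_(0 <= k < j.+1) dc j k *: X k.
  by rewrite -[X 0%N]scale1r -(dc0 j) -(big_nat_recl _ _ (fun k => dc j k *: X k)) // big_nat_recr //= dc_gt // scale0r addr0.
under [X in _ - X]eq_big_nat => k _ do rewrite -scalerA.
rewrite -scaler_sumr -!exprVn !scalerBr !scalerA -!exprD.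
by congr (_ *: _ - _ *: _); congr (_ ^+ _); lia.
Qed.

Lemma T0 i a : T i 0 a = al i a.
Proof. by rewrite T_unlock /T_def big_ord1 muln0 expr0 invr1 dc0 !scale1r subnn !expr0 mulr1 mul1r addn0. Qed.

Hypothesis alD : forall i c a b, al i (c *: a + b) = c *: al i a + al i b.

Lemma al0 i : al i 0 = 0.
Proof. have h := alD i 1 0 0; rewrite !scale1r !addr0 in h. by apply: (addrI (al i 0)); rewrite addr0 -h. Qed.
Lemma alZ i c a : al i (c *: a) = c *: al i a.
Proof. by have := alD i c a 0; rewrite !addr0 al0 addr0. Qed.
Lemma alDD i a b : al i (a + b) = al i a + al i b.
Proof. by have := alD i 1 a b; rewrite !scale1r. Qed.
Lemma alN i a : al i (- a) = - al i a.
Proof. by rewrite -scaleN1r alZ scaleN1r. Qed.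
Lemma alB i a b : al i (a - b) = al i a - al i b.
Proof. by rewrite alDD alN. Qed.

Lemma T_lin i j c a b : T i j (c *: a + b) = c *: T i j a + T i j b.
Proof.
rewrite T_unlock /T_def scalerA mulrC -scalerA -scalerDr; congr (_ *: _).
rewrite scaler_sumr -big_split; apply: eq_bigr => k _ /=.
rewrite alD mulrDr mulrDl -scalerAr -scalerAl scalerDr !scalerA mulrC.
by [].
Qed.

Hypothesis alM : forall i a b, al i (a * b) = al i a * al i b.
Hypothesis alC : forall i k a, al i (al k a) = al i 1 * al (i + k) a.
Hypothesis alw : forall i, al i w = q ^- i *: (al i 1 * w).

Lemma alr1 i y : al i y * al i 1 = al i y.
Proof. by rewrite -alM mulr1. Qed.

Lemma qVK i (x y : A) : q ^- i *: x = q ^- i *: y -> x = y.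
Proof.
move=> /(congr1 (fun z => q ^+ i *: z)); rewrite !scalerA mulrV ?scale1r //.
by rewrite unitfE expf_neq0 // q_neq0.
Qed.

Lemma ewe i : al i 1 * w * al i 1 = al i 1 * w.
Proof.
apply: (@qVK i). rewrite [LHS]scalerAl -alw. by rewrite alr1.
Qed.

Lemma al_wl i y : al i (w * y) = q ^- i *: (al i 1 * w * al i y).
Proof. by rewrite alM alw -scalerAl. Qed.

Lemma al_wr i y : al i (y * w) = q ^- i *: (al i y * w).
Proof. by rewrite alM alw -scalerAr mulrA alr1. Qed.

Lemma al_T i k l a : al i (T k l a) = al i 1 * T (i + k) l a.
Proof.
elim: l k => [|l IH] k; first by rewrite !T0 alC.
rewrite !T_rec alZ alB al_wl al_wr !IH addnS.
rewrite -!scalerAr scalerBr !scalerA.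
have -> : q ^- k / q ^+ i = q ^- (i + k) by rewrite -invfM -exprD addnC.
rewrite mulrBr scalerBr; congr (_ *: _ - _ *: _).
  by rewrite mulrA ewe mulrA.
by rewrite mulrA.
Qed.

Lemma T_mul i j a b : T i j (a * b) =
  \sum_(0 <= m < j.+1) qbinom q j m *: (T (i + m) (j - m) a * T i m b).
Proof.
elim: j i => [|j IH] i.
  by rewrite big_nat1 !T0 alM addn0 /= scale1r.
rewrite sum_pascal T_rec !IH mulr_sumr mulr_suml -sumrB scaler_sumr.
apply: eq_big_nat => m /andP[_ hm].
symmetry; rewrite addSn subSn // T_rec subSS addnS T_rec.
by apply: combo2; rewrite ?exprD; field; rewrite ?expf_neq0 ?q_neq0.
Qed.

Lemma T_comp i j k l a : T i j (T k l a) =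
  \sum_(0 <= m < j.+1) (qbinom q j m * q ^+ (m * k)) *: (T (i + m) (j - m) 1 * T (i + k) (m + l) a).
Proof.
elim: j i => [|j IH] i.
  by rewrite big_nat1 !T0 al_T addn0 /= mul1r mul0n expr0 scale1r.
under [RHS]eq_big_nat => m _ do rewrite -scalerA.
rewrite sum_pascal T_rec !IH mulr_sumr mulr_suml -sumrB scaler_sumr.
apply: eq_big_nat => m /andP[_ hm].
symmetry; rewrite !scalerA !addSn subSn // T_rec subSS addnS T_rec.
by apply: combo2; rewrite ?mulSn ?exprD; field; rewrite ?expf_neq0 ?q_neq0.
Qed.

Hypothesis alP : forall i a, al (i + n) a = al i a.
Hypothesis wC : forall y, w ^+ n * y = y * w ^+ n.
Hypothesis qprim : forall m, (0 < m < n)%N -> q ^+ m != 1.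

Lemma T_van i a : T i n a = 0.
Proof.
have pn : (q^-1) ^+ n = 1 by rewrite exprVn qn invr1.
have pp : forall m, (0 < m < n)%N -> (q^-1) ^+ m != 1.
  by move=> m hm; rewrite exprVn invr_eq1 qprim.
rewrite TE big_nat_recr //= big_ltn // dc0 scale1r subn0 expr0 mulr1 addn0.
rewrite big_nat_cond big1 ?addr0; last first.
  move=> k /andP[/andP[h1 h2] _].
  by rewrite /dc (@qb_vanish K q^-1 n pn pp) ?h1 ?h2 // mulr0 scale0r.
rewrite /dc qb_NN mulr1 (@top_sign K q n) // subnn expr0 mul1r alP scaleN1r wC subrr.
by rewrite scaler0.
Qed.

Lemma T_van_ge i N a : (n <= N)%N -> T i N a = 0.
Proof.
move=> h; have -> : N = (n + (N - n))%N by lia.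
elim: (N - n)%N i => [|t IH] i; first by rewrite addn0 T_van.
by rewrite addnS T_rec !IH mulr0 mul0r subrr scaler0.
Qed.

Hypothesis alm : forall x a, al (x %% n) a = al x a.

Lemma T_mod i j a : T (i %% n) j a = T i j a.
Proof.
have pn : (q^-1) ^+ n = 1 by rewrite exprVn qn invr1.
rewrite !TE !exprM (expr_mod _ pn); congr (_ *: _).
by apply: eq_big_nat => k _; rewrite -alm modnDml alm.
Qed.

End Core.


Notation FK J K := {ffun J -> K^o}.

Section Gen.
Variables (K : fieldType).

Lemma sum_delta (V : lmodType K) (I : finType) (i : I) (F : I -> V) :
  \sum_j (i == j)%:R *: F j = F i.
Proof.
rewrite (bigD1 i) //= eqxx scale1r big1 ?addr0 // => j hj.
by rewrite eq_sym (negPf hj) scale0r.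
Qed.

Lemma sum_deltaK (I : finType) (i : I) (F : I -> K) :
  \sum_j (i == j)%:R * F j = F i.
Proof. exact: (@sum_delta K^o). Qed.

Lemma scale_ffunE (J : finType) (c : K) (f : {ffun J -> K}) x : (c *: (f : FK J K)) x = c * f x.
Proof. exact: ffunE. Qed.

Lemma scvE (J : finType) (c : K) (f : {ffun J -> K}) : scv c f = c *: (f : FK J K).
Proof. by apply/ffunP => x; rewrite !ffunE. Qed.

Lemma bvecE (I : finType) (i j : I) : bvec K i j = (i == j)%:R.
Proof. by rewrite ffunE. Qed.

Lemma tens_bvec (I : finType) (a b : I) : tens (bvec K a) (bvec K b) = bvec K (a, b).
Proof.
apply/ffunP => -[x y]; rewrite !ffunE /= xpair_eqE.
by case: (a == x); case: (b == y); rewrite ?mul1r ?mul0r.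
Qed.

Lemma tens_scalel (I : finType) c (u v : {ffun I -> K}) : tens (K:=K) (c *: (u : FK I K)) v = c *: (tens u v : FK _ K).
Proof. apply/ffunP => x; rewrite !ffunE. by change (c * u x.1 * v x.2 = c * (u x.1 * v x.2)); rewrite mulrA. Qed.

Lemma tens_scaler (I : finType) c (u v : {ffun I -> K}) : tens (K:=K) u (c *: (v : FK I K)) = c *: (tens u v : FK _ K).
Proof. apply/ffunP => x; rewrite !ffunE. by change (u x.1 * (c * v x.2) = c * (u x.1 * v x.2)); rewrite mulrCA. Qed.

Lemma actH_bvec (I : finType) (A : algType K) (act : I -> A -> A) i a :
  actH act (bvec K i) a = act i a.
Proof. by rewrite /actH; under eq_bigr => j _ do rewrite bvecE; rewrite sum_delta. Qed.

Lemma comulH_bvec (I : finType) (cb : I -> {ffun (I * I) -> K}) i p :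
  comulH cb (bvec K i) p = cb i p.
Proof.
rewrite /comulH sum_ffunE; under eq_bigr => j _ do rewrite ffunE bvecE.
by rewrite sum_deltaK.
Qed.

Lemma mulH_bvec (I : finType) (mb : I -> I -> {ffun I -> K}) i k :
  mulH mb (bvec K i) (bvec K k) = mb i k.
Proof.
apply/ffunP => x; rewrite /mulH sum_ffunE.
under eq_bigr => a _ do rewrite sum_ffunE.
under eq_bigr => a _ do under eq_bigr => b _ do rewrite ffunE !bvecE -mulrA.
under eq_bigr => a _ do rewrite -mulr_sumr sum_deltaK.
by rewrite sum_deltaK.
Qed.

Lemma mulHE (I : finType) (mb : I -> I -> {ffun I -> K}) u v :
  mulH mb u v = \sum_i \sum_j (u i * v j) *: (mb i j : FK I K).
Proof. by rewrite /mulH; under eq_bigr => i _ do under eq_bigr => j _ do rewrite scvE. Qed.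

Lemma mulHHE (I : finType) (mb : I -> I -> {ffun I -> K}) U V :
  mulHH mb U V = \sum_p \sum_r (U p * V r) *: (tens (mb p.1 r.1) (mb p.2 r.2) : FK _ K).
Proof. by rewrite /mulHH; under eq_bigr => i _ do under eq_bigr => j _ do rewrite scvE. Qed.

Lemma mulHH_bvec (I : finType) (mb : I -> I -> {ffun I -> K}) P R :
  mulHH mb (bvec K P) (bvec K R) = tens (mb P.1 R.1) (mb P.2 R.2).
Proof.
rewrite mulHHE.
under eq_bigr => p _ do under eq_bigr => r _ do rewrite !bvecE -scalerA.
under eq_bigr => p _ do rewrite -scaler_sumr sum_delta.
by rewrite sum_delta.
Qed.

Lemma mulHH_addl (I : finType) (mb : I -> I -> {ffun I -> K}) U1 U2 V :
  mulHH mb (U1 + U2) V = mulHH mb U1 V + mulHH mb U2 V.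
Proof.
rewrite !mulHHE -big_split; apply: eq_bigr => p _.
rewrite -big_split; apply: eq_bigr => r _.
by rewrite ffunE mulrDl scalerDl.
Qed.

Lemma mulHH_sumr (I : finType) (mb : I -> I -> {ffun I -> K}) U m (c : nat -> K) (V : nat -> FK (I * I) K) :
  mulHH mb U (\sum_(0 <= k < m) c k *: V k) = \sum_(0 <= k < m) c k *: (mulHH mb U (V k) : FK _ K).
Proof.
rewrite !mulHHE.
under eq_bigr => p _ do under eq_bigr => r _ do
  rewrite sum_ffunE mulr_sumr scaler_suml.
under eq_bigr => p _ do rewrite exchange_big /=.
rewrite exchange_big /=; apply: eq_bigr => k _.
rewrite scaler_sumr; apply: eq_bigr => p _.
rewrite scaler_sumr; apply: eq_bigr => r _.
by rewrite ffunE scalerA mulrCA.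
Qed.

Lemma pair_eq_diag (I : eqType) (i : I) (p : I * I) :
  ((p.1 == i) && (p.2 == i)) = ((i, i) == p).
Proof. by case: p => x y; rewrite xpair_eqE /= !(eq_sym i). Qed.

Lemma sum_comb (V : lmodType K) (I : finType) m (c : nat -> K) (P : nat -> I) (X : I -> V) :
  \sum_p ((\sum_(0 <= k < m) c k *: (bvec K (P k) : FK I K)) p) *: X p =
  \sum_(0 <= k < m) c k *: X (P k).
Proof.
under eq_bigr => p _ do rewrite sum_ffunE scaler_suml.
rewrite exchange_big /=; apply: eq_bigr => k _.
under eq_bigr => p _ do rewrite scale_ffunE bvecE -scalerA.
by rewrite -scaler_sumr sum_delta.
Qed.

Lemma lin_sum (V W : lmodType K) (f : V -> W) (I : Type) (r : seq I) (c : I -> K) (x : I -> V) :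
  (forall k a b, f (k *: a + b) = k *: f a + f b) ->
  f (\sum_(i <- r) c i *: x i) = \sum_(i <- r) c i *: f (x i).
Proof.
move=> hf.
have f0 : f 0 = 0.
  have h := hf 1 0 0; rewrite !scale1r !addr0 in h.
  by apply: (addrI (f 0)); rewrite addr0 -h.
elim: r => [|y r IH]; first by rewrite !big_nil.
by rewrite !big_cons hf IH.
Qed.

Lemma actH_lin (I J : finType) (A : algType K) (act : I -> A -> A) (c : J -> K) (u : J -> FK I K) a :
  actH act (\sum_d c d *: u d) a = \sum_d c d *: actH act (u d) a.
Proof.
rewrite /actH; under eq_bigr => e _ do rewrite sum_ffunE scaler_suml.
rewrite exchange_big /=; apply: eq_bigr => d _.
rewrite scaler_sumr; apply: eq_bigr => e _.
by rewrite scale_ffunE scalerA.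
Qed.

Lemma actH_scale_bvec (I : finType) (A : algType K) (act : I -> A -> A) c i a :
  actH act (c *: (bvec K i : FK I K)) a = c *: act i a.
Proof.
rewrite /actH; under eq_bigr => e _ do rewrite scale_ffunE bvecE -scalerA.
by rewrite -scaler_sumr sum_delta.
Qed.

Lemma actH_zero (I : finType) (A : algType K) (act : I -> A -> A) a :
  actH act 0 a = 0.
Proof. by rewrite /actH big1 // => e _; rewrite ffunE scale0r. Qed.

Lemma comulHE (I : finType) (cb : I -> {ffun (I * I) -> K}) h p :
  comulH cb h p = \sum_c h c * cb c p.
Proof. by rewrite /comulH sum_ffunE; apply: eq_bigr => c _; rewrite ffunE. Qed.

Lemma mulH_bvecl (I : finType) (mb : I -> I -> {ffun I -> K}) i v :
  mulH mb (bvec K i) v = \sum_j v j *: (mb i j : FK I K).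
Proof.
rewrite mulHE.
under eq_bigr => a _ do under eq_bigr => b _ do rewrite bvecE -scalerA.
under eq_bigr => a _ do rewrite -scaler_sumr.
by rewrite (@sum_delta _ _ i (fun a => \sum_j v j *: (mb a j : FK I K))).
Qed.

End Gen.


Section Taft2.
Variables (K : fieldType) (n : nat) (q : K).
Hypothesis n2 : (1 < n)%N.
Hypothesis qn : q ^+ n = 1.

Definition om x : 'I_n := Ordinal (ltn_pmod x (ltnW n2)).
Definition tv x y : ('I_n * 'I_n)%type := (om x, om y).

Lemma om_val x : nat_of_ord (om x) = (x %% n)%N. Proof. by []. Qed.
Lemma om_small x : (x < n)%N -> nat_of_ord (om x) = x.
Proof. by move=> h; rewrite om_val modn_small. Qed.
Lemma om_ord (i : 'I_n) : om i = i.
Proof. by apply: val_inj => /=; rewrite modn_small. Qed.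
Lemma eq_om x (i : 'I_n) : (om x == i) = ((x %% n)%N == val i).
Proof. by []. Qed.

Lemma oneTaftE : oneTaft K n = bvec K (tv 0 0).
Proof.
apply/ffunP => -[a b]; rewrite !ffunE /= xpair_eqE !eq_om !mod0n.
by rewrite ![(0%N == _)]eq_sym.
Qed.

Lemma gTaftE : gTaft K n = bvec K (tv 1 0).
Proof.
apply/ffunP => -[a b]; rewrite !ffunE /= xpair_eqE !eq_om !mod0n.
by rewrite ![(_ == val _)]eq_sym.
Qed.

Lemma xTaftE : xTaft K n = bvec K (tv 0 1).
Proof.
apply/ffunP => -[a b]; rewrite !ffunE /= xpair_eqE !eq_om !mod0n (modn_small n2).
by rewrite ![(_ == val _)]eq_sym.
Qed.

Lemma mulTaftE x1 y1 x2 y2 : (y1 < n)%N -> (y2 < n)%N ->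
  @mulTaft K n q (tv x1 y1) (tv x2 y2) =
  if (y1 + y2 < n)%N then q ^+ (y1 * x2) *: (bvec K (tv (x1 + x2) (y1 + y2)) : FK _ K) else 0.
Proof.
move=> h1 h2; apply/ffunP => -[a b].
rewrite /mulTaft ffunE /= /tv /= !(modn_small h1) !(modn_small h2) modnDm.
case h3 : (y1 + y2 < n)%N.
  rewrite scale_ffunE bvecE /= xpair_eqE !eq_om (modn_small h3).
  rewrite [(_ == val a)]eq_sym [(_ == val b)]eq_sym mulnC exprM (expr_mod _ qn) -exprM mulnC.
  by case: andP => _; rewrite ?mulr1 ?mulr0.
rewrite ffunE.
case: (nat_of_ord b =P (y1 + y2)%N) => e; last by rewrite andbF.
by have := ltn_ord b; rewrite e h3.
Qed.

Lemma mulTaftE2 x1 y1 x2 y2 : (y1 + y2 < n)%N ->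
  @mulTaft K n q (tv x1 y1) (tv x2 y2) =
  q ^+ (y1 * x2) *: (bvec K (tv (x1 + x2) (y1 + y2)) : FK _ K).
Proof.
move=> h; rewrite mulTaftE ?h //.
  by apply: leq_ltn_trans h; apply: leq_addr.
by apply: leq_ltn_trans h; apply: leq_addl.
Qed.

Lemma powg i : @powTaft2 K n q (tens (gTaft K n) (gTaft K n)) i = bvec K (tv i 0, tv i 0).
Proof.
elim: i => [|i IH]; first by rewrite /powTaft2 /= oneTaftE tens_bvec.
have -> : @powTaft2 K n q (tens (gTaft K n) (gTaft K n)) i.+1 =
  mulHH (@mulTaft K n q) (tens (gTaft K n) (gTaft K n)) (@powTaft2 K n q (tens (gTaft K n) (gTaft K n)) i) by [].
rewrite IH gTaftE tens_bvec mulHH_bvec /= mulTaftE2 ?addn0 ?(ltnW n2) //.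
by rewrite mul0n expr0 scale1r tens_bvec add1n.
Qed.

Lemma powx j : (j < n)%N ->
  @powTaft2 K n q (tens (xTaft K n) (oneTaft K n) + tens (gTaft K n) (xTaft K n)) j =
  \sum_(0 <= k < j.+1) qbinom q j k *: (bvec K (tv k (j - k), tv 0 k) : FK _ K).
Proof.
elim: j => [|j IH] hj.
  by rewrite big_nat1 /powTaft2 /= oneTaftE tens_bvec scale1r.
set U := (tens (xTaft K n) (oneTaft K n) + tens (gTaft K n) (xTaft K n)).
have -> : @powTaft2 K n q U j.+1 = mulHH (@mulTaft K n q) U (@powTaft2 K n q U j) by [].
rewrite IH ?(ltnW hj) // /U xTaftE gTaftE oneTaftE !tens_bvec mulHH_addl !mulHH_sumr -big_split.
rewrite sum_pascal; apply: eq_big_nat => k /andP[_ hk] /=.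
rewrite !mulHH_bvec /= !mulTaftE2; try lia.
rewrite !tens_scalel !tens_scaler !tens_bvec ?mul0n ?muln0 ?mul1n ?expr0 ?scale1r ?add0n ?addn0.
by rewrite scalerA mulrC subSS !add1n subSn.
Qed.

Lemma comulE (b : ('I_n * 'I_n)%type) : @comulTaft K n q b =
  \sum_(0 <= k < b.2.+1) qbinom q b.2 k *: (bvec K (tv (b.1 + k) (b.2 - k), tv b.1 k) : FK _ K).
Proof.
rewrite /comulTaft powg powx // mulHH_sumr; apply: eq_big_nat => k /andP[_ hk] /=.
have hb := ltn_ord b.2.
rewrite mulHH_bvec /= !mulTaftE2; try lia.
by rewrite !tens_scalel !tens_scaler !tens_bvec ?mul0n ?expr0 ?scale1r ?add0n ?addn0.
Qed.

End Taft2.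


Section Main.
Variables (K : fieldType) (n : nat) (q : K) (A : algType K) (actC : 'I_n -> A -> A) (w : A).
Hypothesis n2 : (1 < n)%N.
Hypothesis qp : n.-primitive_root q.
Hypothesis HA : is_partial_action (oneCn K n) (@mulCn K n) (@comulCn K n) actC.
Hypothesis wc : forall y : A, w ^+ n * y = y * w ^+ n.
Hypothesis hw : forall i : 'I_n, actC i w = q ^- (val i) *: (actC i 1 * w).

Let npos : (0 < n)%N := ltnW n2.
Let qn : q ^+ n = 1 := prim_expr_order qp.
Definition al m a := actC (om n n2 m) a.

Lemma m_alD i c a b : al i (c *: a + b) = c *: al i a + al i b.
Proof. by case: HA => H1 _ _ _; apply: H1. Qed.

Lemma m_alM i a b : al i (a * b) = al i a * al i b.
Proof.
case: HA => _ _ H3 _; have := H3 (bvec K (om n n2 i)) a b.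
rewrite actH_bvec /al => ->.
under eq_bigr => p _ do rewrite comulH_bvec ffunE pair_eq_diag.
by rewrite (@sum_delta K _ _ _ (fun p => actC p.1 a * actC p.2 b)).
Qed.

Lemma om_add x y : oadd (om n n2 x) y = om n n2 (x + y).
Proof. by apply: val_inj; rewrite /= modnDml. Qed.

Lemma m_alC i k a : al i (al k a) = al i 1 * al (i + k) a.
Proof.
case: HA => _ _ _ H4; have := H4 (bvec K (om n n2 i)) (bvec K (om n n2 k)) a.
rewrite !actH_bvec /al => ->.
under eq_bigr => p _ do rewrite comulH_bvec ffunE pair_eq_diag.
rewrite (@sum_delta K _ _ _ (fun p => actC p.1 1 * actH actC (mulH (@mulCn K n) (bvec K p.2) (bvec K (om n n2 k))) a)).
rewrite /= mulH_bvec /mulCn actH_bvec; congr (_ * actC _ a).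
by apply: val_inj; rewrite /= modnDm.
Qed.

Lemma m_alw i : al i w = q ^- i *: (al i 1 * w).
Proof. by rewrite /al hw /= (prim_expr_mod qp). Qed.

Lemma m_alm x a : al (x %% n) a = al x a.
Proof. by rewrite /al; congr (actC _ a); apply: val_inj; rewrite /= modn_mod. Qed.

Lemma m_alP i a : al (i + n) a = al i a.
Proof. by rewrite -m_alm modnDr m_alm. Qed.

Lemma m_qprim m : (0 < m < n)%N -> q ^+ m != 1.
Proof.
move=> /andP[h1 h2]; rewrite -(prim_order_dvd qp); apply/negP => /dvdn_leq.
by move=> /(_ h1); rewrite leqNgt h2.
Qed.

Lemma m_al0 a : al 0 a = a.
Proof.
case: HA => _ H2 _ _; rewrite -[RHS]H2.
have -> : oneCn K n = bvec K (om n n2 0).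
  by apply/ffunP => j; rewrite !ffunE eq_om mod0n eq_sym.
by rewrite actH_bvec.
Qed.

Notation TT := (T K q A al w).
Notation TA := (taft_act q actC w).

Lemma TAE (b : ('I_n * 'I_n)%type) a : TA b a = TT b.1 b.2 a.
Proof.
rewrite T_unlock /T_def /taft_act; congr (_ *: _); apply: eq_bigr => k _.
by rewrite /al; congr (_ *: (_ * actC _ a * _)); apply: val_inj.
Qed.

Lemma TAo x y a : (y < n)%N -> TA (tv n n2 x y) a = TT x y a.
Proof.
move=> hy; rewrite TAE /= (modn_small hy).
exact: (T_mod K n q A al w qn m_alm).
Qed.

Lemma ax3 (c : ('I_n * 'I_n)%type) a b :
  TA c (a * b) = \sum_p (@comulTaft K n q c p) *: (TA p.1 a * TA p.2 b).
Proof.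
rewrite (comulE K n q n2 qn c) (@sum_comb K _ _ _ _ _ (fun p => TA p.1 a * TA p.2 b)) TAE.
rewrite (T_mul K n q A al w npos qn m_alM); apply: eq_big_nat => k /andP[_ hk] /=.
have hc := ltn_ord c.2.
by rewrite !TAo //; lia.
Qed.

Lemma ax4 (c d : ('I_n * 'I_n)%type) a :
  TA c (TA d a) = \sum_p (@comulTaft K n q c p) *:
     (TA p.1 1 * actH TA (@mulTaft K n q p.2 d) a).
Proof.
rewrite (comulE K n q n2 qn c)
  (@sum_comb K _ _ _ _ _ (fun p => TA p.1 1 * actH TA (@mulTaft K n q p.2 d) a)).
rewrite !TAE (T_comp K n q A al w npos qn m_alD m_alM m_alC m_alw).
apply: eq_big_nat => m /andP[_ hm] /=.
have hc := ltn_ord c.2.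
have -> : d = tv n n2 d.1 d.2 by case: d => d1 d2; rewrite /tv !om_ord.
have hd2 := ltn_ord d.2.
rewrite (mulTaftE K n q n2 qn) ?om_val ?(modn_small hd2) //; last by lia.
rewrite (modn_small (ltn_ord d.1)).
case: ifP => h.
  by rewrite actH_scale_bvec -scalerAr scalerA !TAo //; lia.
rewrite actH_zero mulr0 scaler0.
rewrite (T_van_ge K n q A al w npos qn m_alP wc m_qprim (c.1 + d.1) (m + d.2) a) ?mulr0 ?scaler0 //.
by rewrite leqNgt h.
Qed.

Lemma main_sec : is_partial_action (oneTaft K n) (@mulTaft K n q) (@comulTaft K n q) TA.
Proof.
split.
- by move=> b c a a'; rewrite !TAE; exact: (T_lin K q A al w m_alD).
- move=> a; rewrite (oneTaftE K n n2) actH_bvec TAo //.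
  by rewrite (T0 K q A al w) m_al0.
- move=> h a b.
  under [RHS]eq_bigr => p _ do rewrite comulHE scaler_suml.
  rewrite /actH exchange_big /=; apply: eq_bigr => c _.
  rewrite ax3 scaler_sumr; apply: eq_bigr => p _.
  by rewrite scalerA.
- move=> h k a.
  have L : actH TA h (actH TA k a) = \sum_c h c *: \sum_d k d *: TA c (TA d a).
    rewrite /actH; apply: eq_bigr => c _; congr (_ *: _).
    apply: (@lin_sum K A A (TA c) _ _ k (fun d => TA d a)).
    by move=> x y z; rewrite !TAE; exact: (T_lin K q A al w m_alD).
  rewrite L.
  under [RHS]eq_bigr => p _ do rewrite mulH_bvecl actH_lin mulr_sumr comulHE scaler_suml.
  rewrite exchange_big /=; apply: eq_bigr => c _.
  under eq_bigr => d _ do rewrite ax4 !scaler_sumr.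
  under [RHS]eq_bigr => p _ do (rewrite scaler_sumr; under eq_bigr => d _ do rewrite -scalerAr scalerA).
  rewrite scaler_sumr.
  under [LHS]eq_bigr => d _ do rewrite scaler_sumr.
  rewrite exchange_big /=; apply: eq_bigr => p _; apply: eq_bigr => d _.
  by rewrite !scalerA; congr (_ *: _); ring.
Qed.

End Main.

Theorem proposition3p7 (K : fieldType) (n : nat) (q : K) (A : algType K)
  (actC : 'I_n -> A -> A) (w : A) :
  (2 <= n)%N ->
  n.-primitive_root q ->
  is_partial_action (oneCn K n) (@mulCn K n) (@comulCn K n) actC ->
  (forall i : 'I_n, val i = 1%N -> actC i 1 = 0) ->
  (forall y : A, w ^+ n * y = y * w ^+ n) ->
  (forall i : 'I_n, actC i w = q ^- (val i) *: (actC i 1 * w)) ->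
  is_partial_action (oneTaft K n) (@mulTaft K n q) (@comulTaft K n q)
    (@taft_act K n q A actC w).
Proof.
move=> n2 qp HA _ wc hw.
exact: (@main_sec K n q A actC w n2 qp HA wc hw).
Qed.
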